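(* Let $\mathcal{M}=(\Sigma,\Gamma,\mathcal{H},U,M)$ be a QMM with $n=\dim\mathcal{H}$ and $\rho$ a Hermitian operator on $\mathcal{H}$. Then $\operatorname{span}\mathfrak{D}(\rho,m)\subseteq\operatorname{span}\mathfrak{D}(\rho,n^2-1)$ for every $m\in\mathbb{N}$.
   Context: A quantum Mealy machine (QMM) is a tuple $\mathcal{M}=(\Sigma,\Gamma,\mathcal{H},U,M)$ where $\Sigma,\Gamma$ are finite alphabets, $\mathcal{H}$ a finite-dimensional complex Hilbert space, $U=\{U_\sigma\}_{\sigma\in\Sigma}$ unitary operators on $\mathcal{H}$, $M=\{M_\gamma\}_{\gamma\in\Gamma}$ linear operators with $\sum_\gamma M_\gamma^\dagger M_\gamma=I$. For a word $a$, $|a|$ is its length, $a[l:r]=a[l]\cdots a[r]$ (empty if $l>r$), $U_a=U_{a[|a|]}\cdots U_{a[1]}$, $U_\epsilon=I$. A scheduler for $a\in\Sigma^*$ is a finite non-decreasing integer sequence $\mathcal{S}=(s_1\le\dots\le s_{|\mathcal{S}|})$ in $\{0,\dots,|a|\}$ (possibly empty); $\mathfrak{S}_a$ is the set of schedulers for $a$. With $s_0=0$, $s_{|\mathcal{S}|+1}=|a|$, $a_i=a[s_{i-1}+1:s_i]$. For $b\in\Gamma^{|\mathcal{S}|}$, $V_{b|a,\mathcal{S}}=U_{a_{|\mathcal{S}|+1}}M_{b_{|\mathcal{S}|}}U_{a_{|\mathcal{S}|}}\cdots M_{b_1}U_{a_1}$ and $\rho^{\mathcal{M}}_{b|a,\mathcal{S}}=V_{b|a,\mathcal{S}}\rho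 V_{b|a,\mathcal{S}}^\dagger$. For Hermitian $\rho$ and $m\in\mathbb{N}$, $\mathfrak{D}(\rho,m)=\{\rho^{\mathcal{M}}_{b|a,\mathcal{S}}:a\in\Sigma^*,\mathcal{S}\in\mathfrak{S}_a,b\in\Gamma^{|\mathcal{S}|},|a|+|\mathcal{S}|\le m\}$; spans are complex linear spans. *)

(* Defs.v *)
(* Complex scalars: an arbitrary numClosedFieldType C
   (algebraically closed field with conjugation, e.g. algC). *)
From HB Require Import structures.
From mathcomp Require Import all_boot all_order all_algebra.
Set Implicit Arguments. Unset Strict Implicit. Unset Printing Implicit Defensive.
Import Order.TTheory GRing.Theory Num.Theory.
Local Open Scope ring_scope.

Section QMM.
Variable C : numClosedFieldType.
Variable n : nat.

Definition adjmx (A : 'M[C]_n) : 'M[C]_n := (map_mx Num.conj A)^T.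

Definition unitary_op (A : 'M[C]_n) : Prop :=
  adjmx A *m A = 1%:M /\ A *m adjmx A = 1%:M.

Definition hermitian_op (A : 'M[C]_n) : Prop := adjmx A = A.

Variables (Sigma Gamma : finType).
Variable U : Sigma -> 'M[C]_n.
Variable M : Gamma -> 'M[C]_n.

(* U_a = U_{a[|a|]} ... U_{a[1]}, U_eps = I *)
Definition Uword (a : seq Sigma) : 'M[C]_n :=
  foldr (fun s acc => acc *m U s) 1%:M a.

(* a[l+1 : r] (1-indexed) = drop l (take r a) *)
Definition segment (a : seq Sigma) (l r : nat) : seq Sigma := drop l (take r a).

Definition scheduler (a : seq Sigma) (S : seq nat) : bool :=
  sorted leq S && all (fun s => s <= size a)%N S.

(* V_{b|a,S} = U_{a_{k+1}} M_{b_k} U_{a_k} ... M_{b_1} U_{a_1}, prev = s_{i-1} *)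
Fixpoint Vrec (a : seq Sigma) (prev : nat) (S : seq nat) (b : seq Gamma)
  : 'M[C]_n :=
  match S, b with
  | s :: S', g :: b' => Vrec a s S' b' *m M g *m Uword (segment a prev s)
  | _, _ => Uword (drop prev a)
  end.

Definition Vop (a : seq Sigma) (S : seq nat) (b : seq Gamma) : 'M[C]_n :=
  Vrec a 0 S b.

Definition inD (rho : 'M[C]_n) (m : nat) (X : 'M[C]_n) : Prop :=
  exists (a : seq Sigma) (S : seq nat) (b : seq Gamma),
    [/\ scheduler a S, size b = size S, (size a + size S <= m)%N &
        X = Vop a S b *m rho *m adjmx (Vop a S b)].

End QMM.

Definition in_span (C : numClosedFieldType) (n : nat)
  (P : 'M[C]_n -> Prop) (X : 'M[C]_n) : Prop :=
  exists (k : nat) (f : 'I_k -> 'M[C]_n) (c : 'I_k -> C),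
    (forall i, P (f i)) /\ X = \sum_(i < k) c i *: f i.

(* Main.v *)
Require Import Defs.
From HB Require Import structures.
From mathcomp Require Import all_boot all_order all_algebra.
Set Implicit Arguments. Unset Strict Implicit. Unset Printing Implicit Defensive.
Import Order.TTheory GRing.Theory Num.Theory.
Local Open Scope ring_scope.

Section Proof.
Variable C : numClosedFieldType.
Variables (Sigma Gamma : finType) (n : nat).
Variables (U : Sigma -> 'M[C]_n) (M : Gamma -> 'M[C]_n).

Lemma adjmxM (A B : 'M[C]_n) : adjmx (A *m B) = adjmx B *m adjmx A.
Proof. by rewrite /adjmx (map_mxM Num.conj) trmx_mul. Qed.

Lemma adjmx1 : adjmx (1%:M : 'M[C]_n) = 1%:M.
Proof. by rewrite /adjmx map_mx1 ?rmorph1 // trmx1. Qed.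

Notation opT := (Sigma + Gamma)%type.
Definition Aop (o : opT) : 'M[C]_n := match o with inl s => U s | inr g => M g end.
Definition opmat (w : seq opT) : 'M[C]_n := foldr (fun o acc => Aop o *m acc) 1%:M w.
Definition act (o : opT) (X : 'M[C]_n) := Aop o *m X *m adjmx (Aop o).
Definition conjw (w : seq opT) (X : 'M[C]_n) := foldr act X w.

Lemma opmat_rcons w o : opmat (rcons w o) = opmat w *m Aop o.
Proof.
elim: w => [|o' w IH] /=; first by rewrite mul1mx mulmx1.
by rewrite IH mulmxA.
Qed.

Lemma opmat_conj w X : opmat w *m X *m adjmx (opmat w) = conjw w X.
Proof.
elim: w => [|o w IH] /=; first by rewrite mul1mx adjmx1 mulmx1.
by rewrite adjmxM -IH /act !mulmxA.
Qed.

Lemma Vrec_shift x a p S b :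
  Vrec U M (x :: a) p.+1 ([seq i.+1 | i <- S]) b = Vrec U M a p S b.
Proof.
elim: S p b => [|s S IH] p [|g b] //=; rewrite ?drop0 //.
by rewrite IH.
Qed.

Lemma Vrec_0_1 x a S b :
  Vrec U M (x :: a) 0 S b = Vrec U M (x :: a) 1 S b *m U x
  \/ (exists s S', S = s :: S' /\ s = 0%N).
Abort.

Lemma Vop_cons x a S b :
  Vop U M (x :: a) ([seq i.+1 | i <- S]) b = Vop U M a S b *m U x.
Proof.
rewrite /Vop; case: S b => [|s S] [|g b] //=; rewrite ?drop0 //.
by rewrite Vrec_shift /segment /= drop0 !mulmxA.
Qed.
Lemma Vop_M a S b g :
  Vop U M a (0%N :: S) (g :: b) = Vop U M a S b *m M g.
Proof. by rewrite /Vop /= /segment take0 drop0 /Uword /= mulmx1. Qed.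

Lemma Vop_word N a S b : scheduler a S -> size b = size S ->
  (size a + size S)%N = N -> exists w, size w = N /\ Vop U M a S b = opmat w.
Proof.
elim: N a S b => [|N IH] a S b.
  case: a => [|//]; case: S => [|//]; case: b => [|//] _ _ _.
  by exists [::].
case: S => [|s S'] hsch.
  case: b => [|//] _; case: a hsch => [//|x a'] hsch /= [hN].
  have [//||w [hw ew]] := IH a' [::] [::] _ erefl; first by move: hN; rewrite /= !addn0.
  exists (rcons w (inl x)); rewrite size_rcons hw opmat_rcons /= -ew.
  by have := Vop_cons x a' [::] [::].
case: b => [//|g b'] /= [hb] hN.
move: hsch; rewrite /scheduler /= => /and3P[hp hs hall].
case: s hp hs hN => [|s] hp hs hN.
  have [|||w [hw ew]] := IH a S' b'.
  - by rewrite /scheduler (path_sorted hp) hall.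
  - by [].
  - by move: hN; rewrite addnS => -[].
  exists (rcons w (inr g)); rewrite size_rcons hw opmat_rcons Vop_M ew //.
case: a hs hN hall => [//|x a'] hs hN hall.
set S0 := [seq i.-1 | i <- s.+1 :: S'].
have eS : s.+1 :: S' = [seq i.+1 | i <- S0].
  rewrite /S0 -map_comp; symmetry; apply: map_id_in => i.
  rewrite inE => /orP[/eqP-> //|hi].
  have := allP (order_path_min leq_trans hp) i hi.
  by case: i {hi}.
have := Vop_cons x a' S0 (g :: b'); rewrite -eS => ->.
have [|||w [hw ew]] := IH a' S0 (g :: b').
- rewrite /scheduler.
  have : sorted leq (s.+1 :: S') && all (fun s0 => (s0 <= size (x :: a'))%N) (s.+1 :: S').
    by rewrite /= hp hs hall.
  by rewrite eS sorted_map all_map.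
- by rewrite /S0 /= size_map hb.
- by move: hN; rewrite /S0 /= size_map addSn => -[].
exists (rcons w (inl x)); rewrite size_rcons hw opmat_rcons ew //.
Qed.
Lemma word_Vop w : exists a S b, [/\ scheduler a S, size b = size S,
  (size a + size S)%N = size w & Vop U M a S b = opmat w].
Proof.
elim/last_ind: w => [|w o [a [S [b [hsch hb hN ew]]]]].
  by exists [::], [::], [::]; split.
move: hsch; rewrite /scheduler => /andP[hs hall].
case: o => [x|g].
  exists (x :: a), [seq i.+1 | i <- S], b; split.
  - by rewrite /scheduler sorted_map all_map /=; apply/andP; split.
  - by rewrite size_map.
  - by rewrite size_map size_rcons /= addSn hN.
  - by rewrite Vop_cons ew opmat_rcons.
exists a, (0%N :: S), (g :: b); split.
- rewrite /scheduler /= hall andbT.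
  by case: {hb hN hall ew} S hs => //= s S' ->; rewrite andbT.
- by rewrite /= hb.
- by rewrite /= addnS hN size_rcons.
- by rewrite Vop_M ew opmat_rcons.
Qed.

Lemma inD_word rho k X :
  inD U M rho k X <-> exists w, (size w <= k)%N /\ X = conjw w rho.
Proof.
split.
  move=> [a [S [b [hsch hb hk ->]]]].
  have [w [hw ew]] := Vop_word hsch hb erefl.
  by exists w; rewrite hw hk ew opmat_conj.
move=> [w [hw ->]].
have [a [S [b [hsch hb hN ew]]]] := word_Vop w.
exists a, S, b; split => //; first by rewrite hN.
by rewrite ew opmat_conj.
Qed.
Variable rho : 'M[C]_n.

Fixpoint L k : seq 'M[C]_n :=
  if k is k'.+1 then rho :: [seq act o X | o <- enum {: opT}, X <- L k']
  else [:: rho].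

Lemma memL k X : X \in L k <-> exists w, (size w <= k)%N /\ X = conjw w rho.
Proof.
elim: k X => [|k IH] X /=.
  rewrite inE; split; first by move/eqP->; exists [::].
  by case=> [[|o w] [hw ->]].
rewrite inE; split.
  case/orP => [/eqP->|/allpairsP[[o Y] [_ /= hY ->]]]; first by exists [::].
  have [w [hw ->]] := (IH Y).1 hY.
  by exists (o :: w).
case=> [[|o w] [hw ->]]; first by rewrite eqxx.
apply/orP; right; apply/allpairsP; exists (o, conjw w rho); split => //.
  by rewrite mem_enum.
by apply/IH; exists w.
Qed.

Lemma L_S k : L k.+1 = rho :: [seq act o X | o <- enum {: opT}, X <- L k].
Proof. by []. Qed.

Definition W k : {vspace 'M[C]_n} := <<L k>>%VS.

Lemma inspanW k X : in_span (inD U M rho k) X <-> X \in W k.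
Proof.
split.
  move=> [m [f [c [hf ->]]]].
  apply: memv_suml => i _; apply: memvZ; apply: memv_span.
  by apply/memL; apply/inD_word.
move=> hX.
have := coord_span (X := in_tuple (L k)) hX => ->.
exists (size (L k)), (fun i => (L k)`_i), (fun i => coord (in_tuple (L k)) i X).
split => // i; apply/inD_word/memL; exact: mem_nth.
Qed.

Lemma W_mono k k' : (k <= k')%N -> (W k <= W k')%VS.
Proof.
move=> hk; apply/span_subvP => X /memL [w [hw ->]].
apply: memv_span; apply/memL; exists w; split => //; exact: leq_trans hk.
Qed.

Lemma act_sum o (m : nat) (c : 'I_m -> C) (f : 'I_m -> 'M[C]_n) :
  act o (\sum_i c i *: f i) = \sum_i c i *: act o (f i).
Proof.
rewrite /act mulmx_sumr mulmx_suml; apply: eq_bigr => i _.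
by rewrite -scalemxAr -scalemxAl.
Qed.

Lemma act_W k o Y : Y \in W k -> act o Y \in W k.+1.
Proof.
move=> hY; have := coord_span (X := in_tuple (L k)) hY => ->.
rewrite act_sum; apply: memv_suml => i _; apply: memvZ; apply: memv_span.
rewrite L_S inE; apply/orP; right; apply/allpairsP.
exists (o, (L k)`_i); split => //; first by rewrite mem_enum.
exact: mem_nth.
Qed.

Lemma W_step j : W j = W j.+1 -> W j.+1 = W j.+2.
Proof.
move=> e; apply/eqP; rewrite eqEsubv W_mono //=.
apply/span_subvP => X; rewrite L_S inE => /orP[/eqP->|].
  by apply: memv_span; rewrite L_S inE eqxx.
move=> /allpairsP[[o Y] [_ /= hY ->]].
apply: act_W; rewrite e; exact: memv_span.
Qed.

Lemma W_stab j : W j = W j.+1 -> forall i, W (i + j) = W j.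
Proof.
move=> e; elim => [//|i IH].
have : W (i + j) = W (i + j).+1.
  elim: i {IH} => [//|i IHi]; by rewrite addSn -W_step.
by rewrite addSn => <-.
Qed.
Lemma conjw0 w : conjw w 0 = 0.
Proof. elim: w => [|o w IH] //=; by rewrite IH /act mulmx0 mul0mx. Qed.

Lemma mainW m X : X \in W m -> X \in W (n ^ 2 - 1).
Proof.
case: (eqVneq rho 0) => [r0|rn0].
  move=> hX; suff -> : X = 0 by apply: mem0v.
  apply/eqP; rewrite -memv0; move: X hX; apply/subvP.
  apply/span_subvP => Y /memL [w [_ ->]]; by rewrite r0 conjw0 memv0.
have npos : (0 < n)%N.
  case: (posnP n) => // n0; case/eqP: rn0; apply/matrixP => i j.
  by have := ltn_ord i; rewrite {2}n0.
set N := (n ^ 2 - 1)%N.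
have eN : N.+1 = (n * n)%N by rewrite /N subn1 prednK ?mulnn // expn_gt0 npos.
have dimb k : (\dim (W k) <= N.+1)%N.
  apply: leq_trans (dimvS (subvf _)) _; by rewrite dimvf dim_matrix eN.
case: (boolP [exists i : 'I_N.+1, W i == W i.+1]).
  case/existsP => i /eqP e hX.
  case: (leqP m N) => hm; first by apply: (subvP (W_mono hm)).
  have hiN : (i <= N)%N by rewrite -ltnS ltn_ord.
  have him : (i <= m)%N := ltnW (leq_ltn_trans hiN hm).
  by apply: (subvP (W_mono hiN)); rewrite -(W_stab e (m - i)) subnK.
rewrite negb_exists => /forallP hne.
have grow k : (k <= N.+1)%N -> (k.+1 <= \dim (W k))%N.
  elim: k => [_|k IH hk].
    rewrite lt0n dimv_eq0; apply/eqP => W0.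
    have : rho \in W 0 by apply: memv_span; rewrite inE.
    by rewrite W0 memv0 (negbTE rn0).
  have := hne (Ordinal hk); rewrite eqEdim W_mono //= -ltnNge => hlt.
  exact: leq_ltn_trans (IH (ltnW hk)) hlt.
by have := leq_trans (grow _ (leqnn _)) (dimb N.+1); rewrite ltnn.
Qed.
End Proof.

Theorem propositionA2 (C : numClosedFieldType) (Sigma Gamma : finType) (n : nat)
  (U : Sigma -> 'M[C]_n) (M : Gamma -> 'M[C]_n)
  (hU : forall s, unitary_op (U s))
  (hM : \sum_(g : Gamma) adjmx (M g) *m M g = 1%:M)
  (rho : 'M[C]_n) (hrho : hermitian_op rho) (m : nat) :
  forall X, in_span (inD U M rho m) X -> in_span (inD U M rho (n ^ 2 - 1)%N) X.
Proof.
move=> X /inspanW hX; apply/inspanW; exact: mainW hX.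
Qed.
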